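(* Let $p$ be a prime, $n$ a positive integer, and let $\widetilde T(n,\mathbf{Q}_p)$ be the group of upper-triangular invertible $n\times n$ matrices $A=\{a_{j,k}\}$ over $\mathbf{Q}_p$ with $|a_{j,j}|_p=1$ for all $j$. Let $N(A)=\max_{1\le j<k\le n}|a_{j,k}|_p^{1/(k-j)}$ and $D(A,A')=\max_j|a_{j,j}-a'_{j,j}|_p$. Then $N(AA')\le\max(N(A),N(A'))$ and $N(A^{-1})=N(A)$ for $A,A'\in\widetilde T(n,\mathbf{Q}_p)$; $N((A')^{-1}A)$ is a left-invariant and $N(A(A')^{-1})$ a right-invariant semi-ultrametric on $\widetilde T(n,\mathbf{Q}_p)$, both compatible with the topology induced from $M_n(\mathbf{Q}_p)$ and proper, so that $\widetilde T(n,\mathbf{Q}_p)$ has large compact open subgroups; $D$ is a semi-ultrametric invariant under both left and right translations; and $\max(N((A')^{-1}A),D(A,A'))$ (resp. $\max(N(A(A')^{-1}),D(A,A'))$) is a left-invariant (resp. right-invariant) ultrametric on $\widetilde T(n,\mathbf{Q}_p)$ determining its usual topology.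
   Context: A semi-ultrametric is a semimetric $d$ with $d(x,z)\le\max(d(x,y),d(y,z))$. A semimetric on a topological group is compatible if open balls are open, proper if closed bounded sets are compact. A topological group has large compact open subgroups if every compact set is contained in a compact open subgroup. *)

(* Defs.v *)
From HB Require Import structures.
From mathcomp Require Import all_boot all_order all_algebra.
From mathcomp Require Import reals exp.
Set Implicit Arguments. Unset Strict Implicit. Unset Printing Implicit Defensive.
Import Order.TTheory GRing.Theory Num.Theory.
Local Open Scope ring_scope.

(* The p-adic field Q_p, characterised up to isometric isomorphism as  *)
(* a complete valued field K (norm nrm : K -> R) containing Q densely, *)
(* whose norm restricts to the p-adic absolute value on Q.             *)

Definition padic_val (p : nat) (q : rat) : int :=
  Posz (logn p `|numq q|%N) - Posz (logn p `|denq q|%N).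

Definition padic_abs (R : realType) (p : nat) (q : rat) : R :=
  if q == 0 then 0 else (p%:R : R) ^ (- padic_val p q).

Definition is_Qp (p : nat) (R : realType) (K : fieldType) (nrm : K -> R) : Prop :=
  [/\ (forall x, 0 <= nrm x),
      (forall x, nrm x = 0 <-> x = 0),
      (forall x y, nrm (x * y) = nrm x * nrm y),
      (forall x y, nrm (x + y) <= Num.max (nrm x) (nrm y)) &
      (forall q : rat, nrm (ratr q) = padic_abs R p q)] /\
      (forall u : nat -> K,
          (forall e : R, 0 < e -> exists N, forall m k, (N <= m)%N -> (N <= k)%N ->
              nrm (u m - u k) < e) ->
          exists l, forall e : R, 0 < e -> exists N, forall m, (N <= m)%N ->
              nrm (u m - l) < e) /\
      (forall (x : K) (e : R), 0 < e -> exists q : rat, nrm (x - ratr q) < e).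

Section Tn.
Variables (R : realType) (K : fieldType) (nrm : K -> R) (n : nat).

Definition mset := 'M[K]_n -> Prop.

Definition Ttil : mset := fun A =>
  [/\ A \in unitmx,
      (forall j k : 'I_n, (k < j)%N -> A j k = 0) &
      (forall j : 'I_n, nrm (A j j) = 1)].

Definition Nfun (A : 'M[K]_n) : R :=
  \big[Num.max/0]_(j < n) \big[Num.max/0]_(k < n | (j < k)%N)
     powR (nrm (A j k)) ((k - j)%:R^-1).

Definition Dfun (A A' : 'M[K]_n) : R :=
  \big[Num.max/0]_(j < n) nrm (A j j - A' j j).

Definition dL (A A' : 'M[K]_n) : R := Nfun (invmx A' *m A).
Definition dR (A A' : 'M[K]_n) : R := Nfun (A *m invmx A').

(* sup-norm distance on M_n(Q_p); it induces the (product) topology of M_n(Q_p) *)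
Definition mdist (A B : 'M[K]_n) : R :=
  \big[Num.max/0]_(i < n) \big[Num.max/0]_(j < n) nrm (A i j - B i j).

Definition open_in (S U : mset) : Prop :=
  (forall A, U A -> S A) /\
  forall A, U A -> exists2 e : R, 0 < e &
     forall B, S B -> mdist A B < e -> U B.

Definition closed_in (S C : mset) : Prop :=
  (forall A, C A -> S A) /\ open_in S (fun A => S A /\ ~ C A).

Definition compact_in (S C : mset) : Prop :=
  (forall A, C A -> S A) /\
  forall (I : Type) (U : I -> mset),
    (forall i, open_in S (U i)) ->
    (forall A, C A -> exists i, U i A) ->
    exists (m : nat) (f : 'I_m -> I), forall A, C A -> exists j, U (f j) A.

Definition semi_ultrametric (S : mset) (d : 'M[K]_n -> 'M[K]_n -> R) : Prop :=
  forall x y z, S x -> S y -> S z ->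
    [/\ 0 <= d x y, d x x = 0, d x y = d y x & d x z <= Num.max (d x y) (d y z)].

Definition ultrametric (S : mset) (d : 'M[K]_n -> 'M[K]_n -> R) : Prop :=
  semi_ultrametric S d /\ forall x y, S x -> S y -> d x y = 0 -> x = y.

Definition left_invariant (S : mset) (d : 'M[K]_n -> 'M[K]_n -> R) : Prop :=
  forall g x y, S g -> S x -> S y -> d (g *m x) (g *m y) = d x y.

Definition right_invariant (S : mset) (d : 'M[K]_n -> 'M[K]_n -> R) : Prop :=
  forall g x y, S g -> S x -> S y -> d (x *m g) (y *m g) = d x y.

Definition dball (S : mset) (d : 'M[K]_n -> 'M[K]_n -> R) (x : 'M[K]_n) (r : R) : mset :=
  fun y => S y /\ d x y < r.

Definition compatible (S : mset) (d : 'M[K]_n -> 'M[K]_n -> R) : Prop :=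
  forall x r, S x -> open_in S (dball S d x r).

Definition bounded (S : mset) (d : 'M[K]_n -> 'M[K]_n -> R) (C : mset) : Prop :=
  exists x r, S x /\ forall y, C y -> dball S d x r y.

Definition proper_sm (S : mset) (d : 'M[K]_n -> 'M[K]_n -> R) : Prop :=
  forall C, closed_in S C -> bounded S d C -> compact_in S C.

Definition dopen (S : mset) (d : 'M[K]_n -> 'M[K]_n -> R) (U : mset) : Prop :=
  (forall A, U A -> S A) /\
  forall A, U A -> exists2 r : R, 0 < r & forall B, dball S d A r B -> U B.

Definition determines_topology (S : mset) (d : 'M[K]_n -> 'M[K]_n -> R) : Prop :=
  forall U, dopen S d U <-> open_in S U.

Definition subgroup_of (S H : mset) : Prop :=
  [/\ forall A, H A -> S A, H 1%:M,
      (forall A B, H A -> H B -> H (A *m B)) &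
      (forall A, H A -> H (invmx A))].

Definition large_compact_open_subgroups (S : mset) : Prop :=
  forall C, compact_in S C ->
    exists H, [/\ subgroup_of S H, open_in S H, compact_in S H &
                  forall A, C A -> H A].

End Tn.

Arguments Ttil {R K} nrm {n}.
Arguments Nfun {R K} nrm {n}.
Arguments Dfun {R K} nrm {n}.
Arguments dL {R K} nrm {n}.
Arguments dR {R K} nrm {n}.
Arguments mdist {R K} nrm {n}.
Arguments open_in {R K} nrm {n}.
Arguments closed_in {R K} nrm {n}.
Arguments compact_in {R K} nrm {n}.
Arguments compatible {R K} nrm {n}.
Arguments proper_sm {R K} nrm {n}.
Arguments determines_topology {R K} nrm {n}.
Arguments large_compact_open_subgroups {R K} nrm {n}.

(* Main.v *)
Require Import Defs.
From HB Require Import structures.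
From mathcomp Require Import all_boot all_order all_algebra.
From mathcomp Require Import reals exp.
From mathcomp Require Import ring lra zify.
From Stdlib Require Classical ClassicalEpsilon.
Import Order.TTheory GRing.Theory Num.Theory.
Local Open Scope ring_scope.
Set Implicit Arguments. Unset Strict Implicit. Unset Printing Implicit Defensive.







Lemma powR_root (R : realType) (x : R) (m : nat) : 0 <= x -> (0 < m)%N ->
  powR x (m%:R^-1) ^+ m = x.
Proof.
move=> x0 m0.
rewrite -powR_mulrn ?powR_ge0 // -powRrM mulVf ?powRr1 //.
by rewrite pnatr_eq0 -lt0n.
Qed.

Lemma powR_le (R : realType) (x M : R) (m : nat) : 0 <= x -> 0 <= M -> (0 < m)%N ->
  (powR x (m%:R^-1) <= M) = (x <= M ^+ m).
Proof.
move=> x0 M0 m0; apply/idP/idP => h.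
  rewrite -(powR_root x0 m0); apply: lerXn2r => //; rewrite nnegrE ?powR_ge0 //.
have -> : M = powR (M ^+ m) (m%:R^-1) by rewrite -powR_mulrn // -powRrM mulfV ?powRr1 // pnatr_eq0 -lt0n.
apply: ge0_ler_powR => //; rewrite ?nnegrE ?invr_ge0 ?ler0n ?exprn_ge0 //.
Qed.



Lemma max_ultra (R : realType) (a1 b1 a2 b2 a3 b3 : R) :
  a1 <= Num.max a2 a3 -> b1 <= Num.max b2 b3 ->
  Num.max a1 b1 <= Num.max (Num.max a2 b2) (Num.max a3 b3).
Proof.
move=> h1 h2; rewrite ge_max; apply/andP; split.
  apply: le_trans h1 _; rewrite ge_max !le_max !lexx /= ?orbT //.
apply: le_trans h2 _; rewrite ge_max !le_max !lexx /= ?orbT //.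
Qed.

Lemma invmxM (K : fieldType) (n : nat) (A B : 'M[K]_n) :
  A \in unitmx -> B \in unitmx -> invmx (A *m B) = invmx B *m invmx A.
Proof.
move=> uA uB; have uC : A *m B \in unitmx by rewrite unitmx_mul uA uB.
have e : (A *m B) *m (invmx B *m invmx A) = 1%:M.
  by rewrite mulmxA -(mulmxA A) mulmxV // mulmx1 mulmxV.
by rewrite -[RHS]mul1mx -(mulVmx uC) -mulmxA e mulmx1.
Qed.





Lemma dep_choice (T : Type) (P : nat -> T -> Prop) (Q : nat -> T -> T -> Prop) x0 :
  P 0%N x0 -> (forall k x, P k x -> exists y, P k.+1 y /\ Q k x y) ->
  exists u : nat -> T, u 0%N = x0 /\ forall k, P k (u k) /\ Q k (u k) (u k.+1).
Proof.
move=> h0 hs.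
have g : forall k x, P k x -> {y | P k.+1 y /\ Q k x y}.
  by move=> k x hx; apply: ClassicalEpsilon.constructive_indefinite_description; apply: hs.
pose v := fix v (k : nat) : {x | P k x} :=
  match k as k0 return {x | P k0 x} with
  | 0%N => exist _ x0 h0
  | k'.+1 => let w := v k' in let y := g k' (sval w) (svalP w) in
             exist _ (sval y) (proj1 (svalP y))
  end.
exists (fun k => sval (v k)); split => // k; split; first exact: svalP.
by rewrite /=; exact: (proj2 (svalP (g k (sval (v k)) (svalP (v k))))).
Qed.

Lemma max_eps_le (R : realType) (a b : R) : 0 <= b ->
  (forall e, 0 < e -> a <= Num.max b e) -> a <= b.
Proof.
move=> b0 h; rewrite leNgt; apply/negP => ab.
have := h ((a + b) / 2); rewrite le_max => H.
have e0 : 0 < (a + b) / 2 by apply: divr_gt0; lra.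
move: (H e0) => /orP [] ; lra.
Qed.
Section Main.
Variables (p : nat) (R : realType) (K : fieldType) (nrm : K -> R) (n : nat).
Hypothesis pP : prime p.
Hypothesis HQ : is_Qp p nrm.
Local Notation S := (@Ttil R K nrm n).
Local Notation N := (@Nfun R K nrm n).

Lemma nrm_ge0 x : 0 <= nrm x.
Proof. by case: HQ => -[]. Qed.
Lemma nrm_eq0 x : nrm x = 0 <-> x = 0.
Proof. by case: HQ => -[]. Qed.
Lemma nrmM x y : nrm (x * y) = nrm x * nrm y.
Proof. by case: HQ => -[]. Qed.
Lemma nrmD x y : nrm (x + y) <= Num.max (nrm x) (nrm y).
Proof. by case: HQ => -[]. Qed.
Lemma nrm_ratr q : nrm (ratr q) = padic_abs R p q.
Proof. by case: HQ => -[]. Qed.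
Lemma nrm_complete (u : nat -> K) :
  (forall e : R, 0 < e -> exists N, forall m k, (N <= m)%N -> (N <= k)%N ->
              nrm (u m - u k) < e) ->
  exists l, forall e : R, 0 < e -> exists N, forall m, (N <= m)%N ->
              nrm (u m - l) < e.
Proof. by case: HQ => _ [h _]; apply: h. Qed.
Lemma nrm_dense (x : K) (e : R) : 0 < e -> exists q : rat, nrm (x - ratr q) < e.
Proof. by case: HQ => _ [_ h]; apply: h. Qed.

Lemma nrm0 : nrm 0 = 0.
Proof. by apply/nrm_eq0. Qed.

Lemma nrm_neq0 x : x != 0 -> 0 < nrm x.
Proof.
move=> x0; rewrite lt_neqAle nrm_ge0 andbT eq_sym; apply/eqP => /nrm_eq0 h.
by rewrite h eqxx in x0.
Qed.

Lemma nrm1 : nrm 1 = 1.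
Proof.
have h := nrmM 1 1; rewrite mulr1 in h.
have h0 : nrm 1 != 0 by apply/eqP => /nrm_eq0 /eqP; rewrite oner_eq0.
by apply: (mulfI h0); rewrite mulr1 -h.
Qed.

Lemma nrmN1 : nrm (-1) = 1.
Proof.
have h := nrmM (-1) (-1); rewrite mulrNN mulr1 nrm1 in h.
have h0 := nrm_ge0 (-1).
nra.
Qed.

Lemma nrmN x : nrm (- x) = nrm x.
Proof. by rewrite -mulN1r nrmM nrmN1 mul1r. Qed.

Lemma nrmB x y : nrm (x - y) = nrm (y - x).
Proof. by rewrite -nrmN opprB. Qed.

Lemma nrmX x k : nrm (x ^+ k) = nrm x ^+ k.
Proof. by elim: k => [|k IH]; rewrite ?expr0 ?nrm1 // !exprS nrmM IH. Qed.

Lemma nrmV x : nrm (x^-1) = (nrm x)^-1.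
Proof.
have [->|x0] := eqVneq x 0; first by rewrite invr0 nrm0 invr0.
have h := nrmM x x^-1; rewrite mulfV // nrm1 in h.
have hx : nrm x != 0 by rewrite gt_eqF // nrm_neq0.
by apply: (mulfI hx); rewrite -h mulfV.
Qed.

Lemma nrm_max_le x y M : nrm x <= M -> nrm y <= M -> nrm (x + y) <= M.
Proof.
move=> hx hy; apply: (le_trans (nrmD x y)).
by rewrite ge_max hx hy.
Qed.

Lemma nrm_max_lt x y M : nrm x < M -> nrm y < M -> nrm (x + y) < M.
Proof.
move=> hx hy; apply: (le_lt_trans (nrmD x y)).
by rewrite gt_max hx hy.
Qed.

Lemma nrm_sum (I : Type) (r : seq I) (P : pred I) (F : I -> K) M :
  0 <= M -> (forall i, P i -> nrm (F i) <= M) -> nrm (\sum_(i <- r | P i) F i) <= M.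
Proof.
move=> M0 h; elim/big_ind: _ => //; first by rewrite nrm0.
by move=> x y; apply: nrm_max_le.
Qed.

Lemma nrm_sum_lt (I : Type) (r : seq I) (P : pred I) (F : I -> K) M :
  0 < M -> (forall i, P i -> nrm (F i) < M) -> nrm (\sum_(i <- r | P i) F i) < M.
Proof.
move=> M0 h; elim/big_ind: _ => //; first by rewrite nrm0.
by move=> x y; apply: nrm_max_lt.
Qed.

Lemma nrm_natr k : nrm (k%:R) <= 1.
Proof.
elim: k => [|k IH]; first by rewrite nrm0.
by rewrite -addn1 natrD; apply: nrm_max_le => //; rewrite nrm1.
Qed.

Lemma nrm_intr (z : int) : nrm (z%:~R) <= 1.
Proof.
case: z => k; first exact: nrm_natr.
by rewrite NegzE mulrNz nrmN; apply: nrm_natr.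
Qed.

Lemma p_gt1 : (1 < p)%N.
Proof. exact: prime_gt1. Qed.

Lemma pR_gt1 : 1 < (p%:R : R).
Proof. by rewrite ltr1n p_gt1. Qed.

Lemma pR_gt0 : 0 < (p%:R : R).
Proof. by apply: lt_trans pR_gt1. Qed.

Lemma nrm_p : nrm (p%:R) = (p%:R)^-1.
Proof.
have := nrm_ratr (p%:R); rewrite ratr_nat => ->.
rewrite /padic_abs /padic_val.
have -> : ((p%:R : rat) == 0) = false by rewrite pnatr_eq0; case: (p) pP.
have -> : (p%:R : rat) = (Posz p)%:Q by [].
rewrite numq_int denq_int /= logn1.
have -> : logn p p = 1%N by have := pfactorK 1 pP; rewrite expn1.
by rewrite subr0 exprN1.
Qed.

Lemma pinv_lt1 : (p%:R : R)^-1 < 1.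
Proof. by rewrite invf_lt1 ?pR_gt1 ?pR_gt0. Qed.

Lemma pinv_gt0 : 0 < (p%:R : R)^-1.
Proof. by rewrite invr_gt0 pR_gt0. Qed.

Lemma nrm_dvd (z : int) : (p %| `|z|)%N -> nrm (z%:~R) <= (p%:R)^-1.
Proof.
move=> /dvdnP [t ht].
have -> : (z%:~R : K) = ((Num.sg z) * (t%:Z * p%:Z))%:~R.
  by rewrite -PoszM -ht -numEsg.
rewrite !intrM nrmM nrmM [nrm (p%:Z%:~R)]nrm_p.
have h1 := nrm_intr (Num.sg z); have h2 := nrm_intr (Posz t).
have h3 := nrm_ge0 ((Num.sg z)%:~R); have h4 := nrm_ge0 ((Posz t)%:~R).
have h5 := pinv_gt0.
rewrite mulrA; have h6 : nrm (Num.sg z)%:~R * nrm (Posz t)%:~R <= 1 by nra.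
nra.
Qed.

Lemma nrm_coprime (z : int) : ~~ (p %| `|z|)%N -> nrm (z%:~R) = 1.
Proof.
move=> nd.
have cz : coprimez z p by rewrite coprimezE coprime_sym /= prime_coprime.
have [u [v huv]] := Bezoutz z p.
move: huv; rewrite (eqP cz) => huv.
have : (1 : K) = u%:~R * z%:~R + v%:~R * p%:R.
  have -> : (p%:R : K) = (Posz p)%:~R by [].
  by rewrite -!intrM -intrD huv.
move=> e; apply/eqP; rewrite eq_le nrm_intr /=.
have := nrmD (u%:~R * z%:~R) (v%:~R * p%:R); rewrite -e nrm1 !nrmM nrm_p.
have hu := nrm_intr u; have hv := nrm_intr v; have hz := nrm_ge0 (z%:~R).
have hu0 := nrm_ge0 (u%:~R); have hv0 := nrm_ge0 (v%:~R).
have hp := pinv_lt1; have hp0 := pinv_gt0.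
rewrite le_max => /orP [h|h].
  by apply: le_trans h _; rewrite ler_piMl.
exfalso; have : nrm (v%:~R) * (p%:R)^-1 < 1 by nra.
by rewrite ltNge h.
Qed.



Lemma nrm_int_gt0 (z : int) : z != 0 -> 0 < nrm (z%:~R : K).
Proof.
move=> z0; rewrite -ratr_int (nrm_ratr) /padic_abs.
have -> : (z%:~R : rat) == 0 = false by rewrite intr_eq0 (negPf z0).
by apply: exprz_gt0; rewrite (pR_gt0).
Qed.

Lemma resid_rat (q : rat) : nrm (ratr q : K) <= 1 ->
  exists i : nat, (i < p)%N /\ nrm (ratr q - i%:R : K) <= (p%:R)^-1.
Proof.
move=> hq.
set a := numq q; set d := denq q.
have d0 : d != 0 by rewrite /d denq_neq0.
have dK : (d%:~R : K) != 0.
  by apply/eqP => /(nrm_eq0) h; have := nrm_int_gt0 d0; rewrite h ltxx.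
have hqe : (ratr q : K) = a%:~R / d%:~R by [].
have nd : ~~ (p %| `|d|)%N.
  apply/negP => pd.
  have na : ~~ (p %| `|a|)%N.
    apply/negP => pa.
    have := coprime_num_den q; rewrite -/a -/d => /eqP cop.
    have : (p %| gcdn `|a| `|d|)%N by rewrite dvdn_gcd pa pd.
    by rewrite cop dvdn1 => /eqP p1; have := prime_gt1 pP; rewrite p1.
  move: hq; rewrite hqe (nrmM) (nrmV) (nrm_coprime na) mul1r.
  have h1 := nrm_dvd pd; have h2 := nrm_int_gt0 d0.
  have h3 := pR_gt1; have h4 := pinv_gt0.
  rewrite invr_le1 ?unitfE ?gt_eqF //.
  move=> h5; have : 1 <= (p%:R : R)^-1 by apply: le_trans h1.
  by rewrite leNgt (pinv_lt1).
have nd1 := nrm_coprime nd.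
have cz : coprimez d p by rewrite coprimezE coprime_sym /= prime_coprime.
have [u [v huv]] := Bezoutz d p.
move: huv; rewrite (eqP cz) => huv.
set i := ((a * u) %% p)%Z; set w := ((a * u) %/ p)%Z.
have e2 : a * u = w * p + i by rewrite /w /i -divz_eq.
have pz0 : (p%:Z : int) != 0 by rewrite eqz_nat; case: (p) pP.
have i0 : 0 <= i by rewrite /i modz_ge0.
have ip : i < p by rewrite /i ltz_pmod // ltz_nat prime_gt0.
exists `|i|%N; split; first by rewrite -ltz_nat gez0_abs.
have iK : ((`|i|%N)%:R : K) = i%:~R by rewrite -[in RHS](gez0_abs i0).
have eint : a - i * d = (a * v + w * d) * p.
  have -> : i = a * u - w * p by rewrite e2 addrAC subrr add0r.
  have ea : a = a * (u * d + v * p) by rewrite huv mulr1.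
  rewrite {1}ea; ring.
have -> : (ratr q - (`|i|%N)%:R : K) = (a - i * d)%:~R / d%:~R.
  rewrite hqe iK intrB intrM mulrBl -mulrA mulfV // mulr1 //.
rewrite (nrmM) (nrmV) nd1 invr1 mulr1 eint.
apply: (nrm_dvd).
by rewrite abszM /= dvdn_mull.
Qed.

Lemma resid (x : K) : nrm x <= 1 ->
  exists i : nat, (i < p)%N /\ nrm (x - i%:R) <= (p%:R)^-1.
Proof.
move=> hx.
have [q hq] := nrm_dense x (pinv_gt0).
have hq1 : nrm (ratr q : K) <= 1.
  have -> : (ratr q : K) = x - (x - ratr q) by rewrite opprB addrC subrK.
  apply: (nrm_max_le) => //; rewrite (nrmN).
  by apply: ltW; apply: lt_trans hq (pinv_lt1).
have [i [ip hi]] := resid_rat hq1.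
exists i; split => //.
have -> : x - i%:R = (x - ratr q) + (ratr q - i%:R) by rewrite addrA subrK.
by apply: (nrm_max_le) => //; apply: ltW.
Qed.




Definition upper (A : 'M[K]_n) := forall j k : 'I_n, (k < j)%N -> A j k = 0.

Lemma mulmx_upper A B : upper A -> upper B -> upper (A *m B).
Proof.
move=> hA hB j k kj; rewrite mxE big1 // => l _.
case: (ltnP l j) => lj; first by rewrite hA // mul0r.
by rewrite hB ?mulr0 //; apply: leq_trans kj lj.
Qed.

Lemma mulmx_upper_diag A B j : upper A -> upper B -> (A *m B) j j = A j j * B j j.
Proof.
move=> hA hB; rewrite mxE (bigD1 j) //= big1 ?addr0 // => l lj.
case: (ltnP l j) => hl; first by rewrite hA // mul0r.
rewrite hB ?mulr0 //; rewrite ltn_neqAle hl andbT.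
by apply/eqP => /val_inj e; move: lj; rewrite e eqxx.
Qed.

Lemma upper1 : upper 1%:M.
Proof. by move=> j k kj; rewrite mxE; case: eqP => // e; move: kj; rewrite e ltnn. Qed.

Lemma inv_upper A : A \in unitmx -> upper A -> (forall j, A j j != 0) ->
  upper (invmx A).
Proof.
move=> uA hA dA j.
have step : forall k : 'I_n, (forall l : 'I_n, (l < k)%N -> invmx A j l = 0) ->
    (k < j)%N -> invmx A j k = 0.
  move=> k IH kj.
  have := congr1 (fun M : 'M_n => M j k) (mulVmx uA); rewrite !mxE.
  have -> : (j == k) = false by apply/eqP => e; move: kj; rewrite e ltnn.
  rewrite (bigD1 k) //= big1 ?addr0.
    by move=> /eqP; rewrite mulf_eq0 (negPf (dA k)) orbF => /eqP.
  move=> l lk; case: (ltnP k l) => hl; first by rewrite hA // mulr0.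
  have hlk : (l < k)%N.
    by rewrite ltn_neqAle hl andbT; apply/eqP => /val_inj e; move: lk; rewrite e eqxx.
  by rewrite IH // mul0r.
have key : forall m (k : 'I_n), (k <= m)%N -> (k < j)%N -> invmx A j k = 0.
  elim=> [|m IH] k hk kj; apply: step => // l lk.
    by move: hk; rewrite leqn0 => /eqP e; move: lk; rewrite e.
  apply: IH; last by apply: ltn_trans kj.
  by rewrite -ltnS (leq_trans lk hk).
move=> k kj; exact: (key k).
Qed.

Lemma inv_upper_diag A j : A \in unitmx -> upper A -> (forall j, A j j != 0) ->
  invmx A j j = (A j j)^-1.
Proof.
move=> uA hA dA.
have := congr1 (fun M : 'M_n => M j j) (mulmxV uA).
rewrite mulmx_upper_diag //; last exact: inv_upper.
rewrite mxE eqxx /= => e.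
by apply: (mulfI (dA j)); rewrite e mulfV.
Qed.

Lemma S_upper A : S A -> upper A.
Proof. by case. Qed.
Lemma S_unit A : S A -> A \in unitmx.
Proof. by case. Qed.
Lemma S_diag A j : S A -> nrm (A j j) = 1.
Proof. by case=> _ _ ->. Qed.
Lemma S_diag0 A j : S A -> A j j != 0.
Proof.
move=> hA; apply/eqP => e; have := S_diag j hA; rewrite e (nrm0) => /eqP.
by rewrite eq_sym oner_eq0.
Qed.

Lemma S_mul A B : S A -> S B -> S (A *m B).
Proof.
move=> hA hB; split.
- by rewrite unitmx_mul S_unit // S_unit.
- exact: mulmx_upper (S_upper hA) (S_upper hB).
- move=> j; rewrite mulmx_upper_diag; [|exact: S_upper hA|exact: S_upper hB].
  rewrite (nrmM).
  by rewrite !S_diag // mulr1.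
Qed.

Lemma S_inv A : S A -> S (invmx A).
Proof.
move=> hA; split.
- by rewrite unitmx_inv S_unit.
- by apply: inv_upper; [apply: S_unit | apply: S_upper | move=> j; apply: S_diag0].
- move=> j; rewrite inv_upper_diag; [|apply: S_unit | apply: S_upper | move=> i; apply: S_diag0] => //.
  by rewrite (nrmV) S_diag // invr1.
Qed.

Lemma S1 : S 1%:M.
Proof.
split; first exact: unitmx1.
- exact: upper1.
- by move=> j; rewrite mxE eqxx (nrm1).
Qed.




Lemma Nfun_ge0 A : 0 <= N A.
Proof. exact: bigmax_ge_id. Qed.

Lemma Nfun_le A M : 0 <= M -> (N A <= M) <->
  (forall j k : 'I_n, (j < k)%N -> nrm (A j k) <= M ^+ (k - j)).
Proof.
move=> M0; split.
  move=> h j k jk; rewrite -powR_le ?(nrm_ge0) ?subn_gt0 //.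
  apply: le_trans h; apply: le_trans (le_bigmax _ _ j).
  exact: (le_bigmax_cond _ (fun k : 'I_n => powR (nrm (A j k)) ((k - j)%:R^-1)) jk).
move=> h; apply: bigmax_le => // j _; apply: bigmax_le => // k jk.
by rewrite powR_le ?(nrm_ge0) ?subn_gt0 // h.
Qed.

Definition Nb (M : R) (A : 'M[K]_n) :=
  forall j k : 'I_n, (j <= k)%N -> nrm (A j k) <= M ^+ (k - j).

Lemma Nb_of A M : S A -> 0 <= M -> N A <= M -> Nb M A.
Proof.
move=> hA M0 /(Nfun_le _ M0) h j k; rewrite leq_eqVlt => /orP [/eqP e|jk]; last exact: h.
have -> : k = j by apply: val_inj.
by rewrite subnn expr0 S_diag //.
Qed.

Lemma Nb_mul A B M : S A -> S B -> 0 <= M -> Nb M A -> Nb M B -> Nb M (A *m B).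
Proof.
move=> hA hB M0 bA bB j k jk; rewrite mxE.
apply: (nrm_sum); first by rewrite exprn_ge0.
move=> l _; case: (ltnP l j) => lj.
  by rewrite (S_upper hA) // mul0r (nrm0) exprn_ge0.
case: (ltnP k l) => kl.
  by rewrite (S_upper hB) // mulr0 (nrm0) exprn_ge0.
rewrite (nrmM).
have -> : (k - j = (l - j) + (k - l))%N by lia.
rewrite exprD; apply: ler_pM; rewrite ?(nrm_ge0) //; [exact: bA | exact: bB].
Qed.

Lemma Nb_inv A M : S A -> 0 <= M -> Nb M A -> Nb M (invmx A).
Proof.
move=> hA M0 bA.
have hB := S_inv hA.
have key : forall d (j k : 'I_n), (j <= k)%N -> (k - j <= d)%N ->
    nrm (invmx A j k) <= M ^+ (k - j).
  elim=> [|d IH] j k jk hd.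
    have e : k = j by apply: val_inj => /=; lia.
    by rewrite e subnn expr0 S_diag.
  rewrite leq_eqVlt in jk; case/orP: jk => [/eqP e|jk].
    have e' : k = j by apply: val_inj.
    by rewrite e' subnn expr0 S_diag.
  have := congr1 (fun X : 'M_n => X j k) (mulVmx (S_unit hA)); rewrite !mxE.
  have -> : (j == k) = false by apply/eqP => e; move: jk; rewrite e ltnn.
  rewrite (bigD1 k) //= => /eqP; rewrite addr_eq0 => /eqP e.
  have : nrm (invmx A j k * A k k) <= M ^+ (k - j).
    rewrite e (nrmN); apply: (nrm_sum); first by rewrite exprn_ge0.
    move=> l lk; case: (ltnP l j) => lj.
      by rewrite (S_upper hB) // mul0r (nrm0) exprn_ge0.
    case: (ltnP k l) => kl.
      by rewrite (S_upper hA) // mulr0 (nrm0) exprn_ge0.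
    have lk' : (l < k)%N.
      by rewrite ltn_neqAle kl andbT; apply/eqP => /val_inj e'; move: lk; rewrite e' eqxx.
    rewrite (nrmM).
    have -> : (k - j = (l - j) + (k - l))%N by lia.
    rewrite exprD; apply: ler_pM; rewrite ?(nrm_ge0) //.
      by apply: IH => //; lia.
    by apply: bA; apply: ltnW.
  by rewrite (nrmM) S_diag // mulr1.
move=> j k jk; exact: (key (k - j)%N).
Qed.

Lemma Nfun_of_Nb A M : 0 <= M -> Nb M A -> N A <= M.
Proof. by move=> M0 h; apply/Nfun_le => // j k jk; apply: h; apply: ltnW. Qed.

Lemma NfunM A B : S A -> S B -> N (A *m B) <= Num.max (N A) (N B).
Proof.
move=> hA hB; set M := Num.max _ _.
have M0 : 0 <= M by rewrite le_max Nfun_ge0.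
apply: Nfun_of_Nb => //; apply: Nb_mul => //; apply: Nb_of => //.
  by rewrite le_max lexx.
by rewrite le_max lexx orbT.
Qed.

Lemma NfunV_le A : S A -> N (invmx A) <= N A.
Proof.
move=> hA; apply: Nfun_of_Nb; first exact: Nfun_ge0.
by apply: Nb_inv => //; [apply: Nfun_ge0 | apply: Nb_of => //; apply: Nfun_ge0].
Qed.

Lemma NfunV A : S A -> N (invmx A) = N A.
Proof.
move=> hA; apply/eqP; rewrite eq_le NfunV_le //=.
by rewrite -{1}(invmxK A) NfunV_le //; apply: (S_inv).
Qed.

Lemma Nfun1 : N 1%:M = 0.
Proof.
apply/eqP; rewrite eq_le Nfun_ge0 andbT; apply/Nfun_le => // j k jk.
rewrite mxE.
have -> : (j == k) = false by apply/eqP => e; move: jk; rewrite e ltnn.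
by rewrite (nrm0) expr0n subn_eq0 leqNgt jk.
Qed.

Lemma Nfun_eq0 A (j k : 'I_n) : N A = 0 -> (j < k)%N -> A j k = 0.
Proof.
move=> h jk; have : N A <= 0 by rewrite h.
move/Nfun_le => /(_ (lexx 0) j k jk).
rewrite expr0n subn_eq0 leqNgt jk /= => h2.
by apply/(nrm_eq0); apply/eqP; rewrite eq_le h2 (nrm_ge0).
Qed.




Lemma semi_ultra_max (d1 d2 : 'M[K]_n -> 'M[K]_n -> R) :
  semi_ultrametric S d1 -> semi_ultrametric S d2 ->
  semi_ultrametric S (fun x y => Num.max (d1 x y) (d2 x y)).
Proof.
move=> h1 h2 x y z hx hy hz.
have [a1 b1 c1 e1] := h1 x y z hx hy hz.
have [a2 b2 c2 e2] := h2 x y z hx hy hz.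
split.
- by rewrite le_max a1.
- by rewrite b1 b2 maxxx.
- by rewrite c1 c2.
- exact: max_ultra.
Qed.

Lemma dL_sym x y : S x -> S y -> dL nrm x y = dL nrm y x.
Proof.
move=> hx hy; rewrite /dL -(NfunV); last by apply: (S_mul) => //; apply: (S_inv).
rewrite invmxM ?invmxK //; [by rewrite unitmx_inv (S_unit hy) | exact: S_unit hx].
Qed.

Lemma dR_sym x y : S x -> S y -> dR nrm x y = dR nrm y x.
Proof.
move=> hx hy; rewrite /dR -(NfunV); last by apply: (S_mul) => //; apply: (S_inv).
rewrite invmxM ?invmxK //; [exact: S_unit hx | by rewrite unitmx_inv (S_unit hy)].
Qed.

Lemma dL_semi : semi_ultrametric S (dL nrm).
Proof.
move=> x y z hx hy hz; split.
- exact: Nfun_ge0.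
- by rewrite /dL mulVmx ?(S_unit hx) // (Nfun1).
- exact: dL_sym.
- rewrite /dL.
  have -> : invmx z *m x = (invmx z *m y) *m (invmx y *m x).
    by rewrite mulmxA -(mulmxA _ y) mulmxV ?(S_unit hy) // mulmx1.
  rewrite maxC; apply: (NfunM); apply: (S_mul) => //; exact: (S_inv).
Qed.

Lemma dR_semi : semi_ultrametric S (dR nrm).
Proof.
move=> x y z hx hy hz; split.
- exact: Nfun_ge0.
- by rewrite /dR mulmxV ?(S_unit hx) // (Nfun1).
- exact: dR_sym.
- rewrite /dR.
  have -> : x *m invmx z = (x *m invmx y) *m (y *m invmx z).
    by rewrite mulmxA -(mulmxA _ _ y) mulVmx ?(S_unit hy) // mulmx1.
  apply: (NfunM); apply: (S_mul) => //; exact: (S_inv).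
Qed.

Lemma dL_left : left_invariant S (dL nrm).
Proof.
move=> g x y hg hx hy; rewrite /dL invmxM ?(S_unit hg) ?(S_unit hy) //.
by rewrite mulmxA -(mulmxA _ _ g) mulVmx ?(S_unit hg) // mulmx1.
Qed.

Lemma dR_right : right_invariant S (dR nrm).
Proof.
move=> g x y hg hx hy; rewrite /dR invmxM ?(S_unit hg) ?(S_unit hy) //.
by rewrite mulmxA -(mulmxA _ g) mulmxV ?(S_unit hg) // mulmx1.
Qed.

Lemma Dfun_ge0 (x y : 'M[K]_n) : 0 <= Dfun nrm x y.
Proof. exact: bigmax_ge_id. Qed.

Lemma Dfun_semi : semi_ultrametric S (Dfun nrm).
Proof.
move=> x y z hx hy hz; split.
- exact: Dfun_ge0.
- apply/eqP; rewrite eq_le Dfun_ge0 andbT; apply: bigmax_le => // j _.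
  by rewrite subrr (nrm0).
- by rewrite /Dfun; apply: eq_bigr => j _; rewrite (nrmB).
- apply: bigmax_le => [|j _]; first by rewrite le_max Dfun_ge0.
  have -> : x j j - z j j = (x j j - y j j) + (y j j - z j j) by rewrite addrA subrK.
  apply: le_trans (nrmD _ _) _.
  rewrite ge_max !le_max; apply/andP; split; apply/orP; [left|right];
    exact: (le_bigmax _ (fun j => nrm (_ j j - _ j j)) j).
Qed.

Lemma Dfun_left : left_invariant S (Dfun nrm).
Proof.
move=> g x y hg hx hy; rewrite /Dfun; apply: eq_bigr => j _.
rewrite (mulmx_upper_diag _ (S_upper hg) (S_upper hx)) (mulmx_upper_diag _ (S_upper hg) (S_upper hy)).
by rewrite -mulrBr (nrmM) S_diag // mul1r.
Qed.

Lemma Dfun_right : right_invariant S (Dfun nrm).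
Proof.
move=> g x y hg hx hy; rewrite /Dfun; apply: eq_bigr => j _.
rewrite (mulmx_upper_diag _ (S_upper hx) (S_upper hg)) (mulmx_upper_diag _ (S_upper hy) (S_upper hg)).
by rewrite -mulrBl (nrmM) (S_diag _ hg) mulr1.
Qed.

Lemma Dfun_eq0 (x y : 'M[K]_n) j : Dfun nrm x y = 0 -> x j j = y j j.
Proof.
move=> h; apply/eqP; rewrite -subr_eq0; apply/eqP; apply/(nrm_eq0).
apply/eqP; rewrite eq_le (nrm_ge0) andbT -h.
exact: (le_bigmax _ (fun j => nrm (x j j - y j j)) j).
Qed.

Lemma max_eq0 (a b : R) : 0 <= a -> 0 <= b -> Num.max a b = 0 -> a = 0 /\ b = 0.
Proof.
move=> a0 b0 h; have : Num.max a b <= 0 by rewrite h.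
rewrite ge_max => /andP [ha hb]; split; apply/eqP; rewrite eq_le ?ha ?hb ?a0 ?b0 //.
Qed.

Lemma upper_eq1 (Z : 'M[K]_n) : upper Z -> N Z = 0 -> (forall j, Z j j = 1) -> Z = 1%:M.
Proof.
move=> hu hN hd; apply/matrixP => j k; rewrite mxE.
case: (ltngtP j k) => jk.
- by rewrite (Nfun_eq0 hN jk); have -> : (j == k) = false by apply/eqP => e; move: jk; rewrite e ltnn.
- by rewrite hu //; have -> : (j == k) = false by apply/eqP => e; move: jk; rewrite e ltnn.
- have e : j = k by apply: val_inj.
  by rewrite e eqxx hd.
Qed.

Lemma dLD_ultra : ultrametric S (fun A A' => Num.max (dL nrm A A') (Dfun nrm A A')).
Proof.
split; first by apply: semi_ultra_max; [apply: dL_semi | apply: Dfun_semi].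
move=> x y hx hy /max_eq0 [] //; [exact: Nfun_ge0 | exact: Dfun_ge0|].
move=> hN hD.
have hZ : S (invmx y *m x) by apply: (S_mul) => //; apply: (S_inv).
have : invmx y *m x = 1%:M.
  apply: upper_eq1 => //; first exact: S_upper.
  move=> j; rewrite (mulmx_upper_diag _ (S_upper (S_inv hy)) (S_upper hx)).
  rewrite (inv_upper_diag _ (S_unit hy) (S_upper hy) (fun i => S_diag0 i hy)).
  by rewrite (Dfun_eq0 j hD) mulVf // (S_diag0).
move=> e; have := congr1 (mulmx y) e.
by rewrite mulmxA mulmxV ?(S_unit hy) // mul1mx mulmx1.
Qed.

Lemma dRD_ultra : ultrametric S (fun A A' => Num.max (dR nrm A A') (Dfun nrm A A')).
Proof.
split; first by apply: semi_ultra_max; [apply: dR_semi | apply: Dfun_semi].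
move=> x y hx hy /max_eq0 [] //; [exact: Nfun_ge0 | exact: Dfun_ge0|].
move=> hN hD.
have hZ : S (x *m invmx y) by apply: (S_mul) => //; apply: (S_inv).
have : x *m invmx y = 1%:M.
  apply: upper_eq1 => //; first exact: S_upper.
  move=> j; rewrite (mulmx_upper_diag _ (S_upper hx) (S_upper (S_inv hy))).
  rewrite (inv_upper_diag _ (S_unit hy) (S_upper hy) (fun i => S_diag0 i hy)).
  by rewrite (Dfun_eq0 j hD) mulfV // (S_diag0).
move=> e; have := congr1 (mulmx^~ y) e.
by rewrite -mulmxA mulVmx ?(S_unit hy) // mul1mx mulmx1.
Qed.

Lemma dLD_left : left_invariant S (fun A A' => Num.max (dL nrm A A') (Dfun nrm A A')).
Proof. by move=> g x y hg hx hy; rewrite dL_left // Dfun_left. Qed.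

Lemma dRD_right : right_invariant S (fun A A' => Num.max (dR nrm A A') (Dfun nrm A A')).
Proof. by move=> g x y hg hx hy; rewrite dR_right // Dfun_right. Qed.


Lemma mdist_ge0 (A B : 'M[K]_n) : 0 <= mdist nrm A B.
Proof. exact: bigmax_ge_id. Qed.

Lemma mdist_entry (A B : 'M[K]_n) i j : nrm (A i j - B i j) <= mdist nrm A B.
Proof.
apply: le_trans (le_bigmax _ _ i).
exact: (le_bigmax _ (fun j => nrm (A i j - B i j)) j).
Qed.

Lemma mdist_le (A B : 'M[K]_n) a : 0 <= a ->
  (forall i j, nrm (A i j - B i j) <= a) -> mdist nrm A B <= a.
Proof. by move=> a0 h; apply: bigmax_le => // i _; apply: bigmax_le. Qed.

Lemma mdist_lt (A B : 'M[K]_n) a : 0 < a ->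
  (forall i j, nrm (A i j - B i j) < a) -> mdist nrm A B < a.
Proof. by move=> a0 h; apply: bigmax_lt => // i _; apply: bigmax_lt. Qed.

Lemma mdist_sym (A B : 'M[K]_n) : mdist nrm A B = mdist nrm B A.
Proof. by apply: eq_bigr => i _; apply: eq_bigr => j _; rewrite nrmB. Qed.

Lemma mdist_ultra (A B C : 'M[K]_n) :
  mdist nrm A C <= Num.max (mdist nrm A B) (mdist nrm B C).
Proof.
apply: mdist_le => [|i j]; first by rewrite le_max mdist_ge0.
have -> : A i j - C i j = (A i j - B i j) + (B i j - C i j) by rewrite addrA subrK.
apply: le_trans (nrmD _ _) _; rewrite ge_max; apply/andP; split.
  by rewrite le_max mdist_entry.
by rewrite le_max mdist_entry orbT.
Qed.

Definition mnorm (A : 'M[K]_n) := mdist nrm A 0.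

Lemma mnorm_entry (A : 'M[K]_n) i j : nrm (A i j) <= mnorm A.
Proof. by have := mdist_entry A 0 i j; rewrite mxE subr0. Qed.

Lemma mnorm_ge0 (A : 'M[K]_n) : 0 <= mnorm A.
Proof. exact: mdist_ge0. Qed.

Lemma mnorm_le (A : 'M[K]_n) a : 0 <= a -> (forall i j, nrm (A i j) <= a) -> mnorm A <= a.
Proof. by move=> a0 h; apply: mdist_le => // i j; rewrite mxE subr0. Qed.

Lemma mnorm_lt (A : 'M[K]_n) a : 0 < a -> (forall i j, nrm (A i j) < a) -> mnorm A < a.
Proof. by move=> a0 h; apply: mdist_lt => // i j; rewrite mxE subr0. Qed.

Lemma mnorm_mul (A B : 'M[K]_n) : mnorm (A *m B) <= mnorm A * mnorm B.
Proof.
apply: mnorm_le => [|i j]; first by rewrite mulr_ge0 ?mnorm_ge0.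
rewrite mxE; apply: nrm_sum => [|l _]; first by rewrite mulr_ge0 ?mnorm_ge0.
by rewrite nrmM; apply: ler_pM; rewrite ?nrm_ge0 ?mnorm_entry.
Qed.

Lemma mdist_mnorm (A B : 'M[K]_n) : mdist nrm A B = mnorm (A - B).
Proof. by apply: eq_bigr => i _; apply: eq_bigr => j _; rewrite !mxE subr0. Qed.

Definition cont (d : 'M[K]_n -> 'M[K]_n -> R) := forall A r, S A -> 0 < r ->
  exists2 e : R, 0 < e & forall B, S B -> mdist nrm A B < e -> d A B < r.
Definition icont (d : 'M[K]_n -> 'M[K]_n -> R) := forall A e, S A -> 0 < e ->
  exists2 r : R, 0 < r & forall B, S B -> d A B < r -> mdist nrm A B < e.

Lemma compat_of d : semi_ultrametric S d -> cont d -> compatible nrm S d.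
Proof.
move=> hd hc x r hx; split; first by move=> A [].
move=> A [hA hxA].
have r0 : 0 < r by have [h0 _ _ _] := hd x A A hx hA hA; apply: le_lt_trans h0 hxA.
have [e e0 he] := hc A r hA r0; exists e => // B hB hAB; split => //.
have [_ _ _ u] := hd x A B hx hA hB.
by apply: le_lt_trans u _; rewrite gt_max hxA he.
Qed.

Lemma topo_of d : cont d -> icont d -> determines_topology nrm S d.
Proof.
move=> hc hi U; split.
  move=> [hUS hU]; split => // A hA.
  have [r r0 hr] := hU A hA.
  have [e e0 he] := hc A r (hUS A hA) r0.
  by exists e => // B hB hAB; apply: hr; split => //; apply: he.
move=> [hUS hU]; split => // A hA.
have [e e0 he] := hU A hA.
have [r r0 hr] := hi A e (hUS A hA) e0.
by exists r => // B [hB hAB]; apply: he => //; apply: hr.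
Qed.

Lemma Dfun_le_mdist (A B : 'M[K]_n) : Dfun nrm A B <= mdist nrm A B.
Proof. by apply: bigmax_le => [|j _]; rewrite ?mdist_ge0 ?mdist_entry. Qed.

Lemma offdiag_sub1 (X : 'M[K]_n) (j k : 'I_n) : j != k -> (X - 1%:M) j k = X j k.
Proof. by move=> jk; rewrite !mxE (negPf jk) subr0. Qed.

Lemma diag_sub1 (X : 'M[K]_n) (j : 'I_n) : (X - 1%:M) j j = X j j - 1.
Proof. by rewrite [LHS]mxE [X in _ + X]mxE [X in - X]mxE eqxx. Qed.

Lemma small_bound (c d e rho : R) : 0 <= c -> 0 <= d -> d < e -> e * (c + 1) = rho ->
  c * d <= rho.
Proof. move=> c0 d0 de he; nra. Qed.

Lemma cont_dL : cont (dL nrm).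
Proof.
move=> A r hA r0.
set rho := Num.min (r / 2) 1.
have rho0 : 0 < rho by rewrite lt_min ltr01 andbT divr_gt0.
have rho1 : rho <= 1 by rewrite ge_min lexx orbT.
have rhor : rho < r by rewrite gt_min; apply/orP; left; rewrite ltr_pdivrMr // ltr_pMr // ltr1n.
set c := mnorm (invmx A).
have c0 : 0 <= c by apply: mnorm_ge0.
set e := rho ^+ n / (c + 1).
have c1 : 0 < c + 1 by rewrite ltr_wpDl.
have e0 : 0 < e by rewrite divr_gt0 // exprn_gt0.
have he : e * (c + 1) = rho ^+ n by rewrite divfK // gt_eqF.
exists e => // B hB hAB.
rewrite dL_sym //; apply: le_lt_trans rhor; rewrite /dL.
apply/Nfun_le; first exact: ltW.
move=> j k jk.
have -> : (invmx A *m B) j k = (invmx A *m (B - A)) j k.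
  rewrite mulmxBr mulVmx ?(S_unit hA) // offdiag_sub1 //.
  by apply/eqP => e'; move: jk; rewrite e' ltnn.
apply: le_trans (mnorm_entry _ j k) _; apply: le_trans (mnorm_mul _ _) _.
apply: le_trans (_ : rho ^+ n <= _); last first.
  apply: ler_wiXn2l; [exact: ltW | exact: rho1 | have := ltn_ord k; lia].
apply: small_bound he => //; first exact: mnorm_ge0.
by rewrite -mdist_mnorm mdist_sym.
Qed.

Lemma cont_dR : cont (dR nrm).
Proof.
move=> A r hA r0.
set rho := Num.min (r / 2) 1.
have rho0 : 0 < rho by rewrite lt_min ltr01 andbT divr_gt0.
have rho1 : rho <= 1 by rewrite ge_min lexx orbT.
have rhor : rho < r by rewrite gt_min; apply/orP; left; rewrite ltr_pdivrMr // ltr_pMr // ltr1n.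
set c := mnorm (invmx A).
have c0 : 0 <= c by apply: mnorm_ge0.
set e := rho ^+ n / (c + 1).
have c1 : 0 < c + 1 by rewrite ltr_wpDl.
have e0 : 0 < e by rewrite divr_gt0 // exprn_gt0.
have he : e * (c + 1) = rho ^+ n by rewrite divfK // gt_eqF.
exists e => // B hB hAB.
rewrite dR_sym //; apply: le_lt_trans rhor; rewrite /dR.
apply/Nfun_le; first exact: ltW.
move=> j k jk.
have -> : (B *m invmx A) j k = ((B - A) *m invmx A) j k.
  rewrite mulmxBl mulmxV ?(S_unit hA) // offdiag_sub1 //.
  by apply/eqP => e'; move: jk; rewrite e' ltnn.
apply: le_trans (mnorm_entry _ j k) _; apply: le_trans (mnorm_mul _ _) _.
apply: le_trans (_ : rho ^+ n <= _); last first.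
  apply: ler_wiXn2l; [exact: ltW | exact: rho1 | have := ltn_ord k; lia].
rewrite mulrC; apply: small_bound he => //; first exact: mnorm_ge0.
by rewrite -mdist_mnorm mdist_sym.
Qed.

Lemma cont_maxD d : cont d -> cont (fun A A' => Num.max (d A A') (Dfun nrm A A')).
Proof.
move=> hc A r hA r0; have [e e0 he] := hc A r hA r0.
exists (Num.min e r); first by rewrite lt_min e0 r0.
move=> B hB; rewrite lt_min => /andP [h1 h2].
by rewrite gt_max he //= (le_lt_trans (Dfun_le_mdist _ _) h2).
Qed.

Lemma small_bound2 (c w r e : R) : 0 <= c -> 0 <= w -> w < r -> 0 < r ->
  r * (c + 1) <= e -> c * w < e.
Proof. move=> c0 w0 wr r0 hr; nra. Qed.

Lemma icont_dLD : icont (fun A A' => Num.max (dL nrm A A') (Dfun nrm A A')).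
Proof.
move=> A e hA e0.
set c := mnorm A.
have c0 : 0 <= c by apply: mnorm_ge0.
have c1 : 0 < c + 1 by rewrite ltr_wpDl.
set r := Num.min 1 (e / (c + 1)).
have r0 : 0 < r by rewrite lt_min ltr01 divr_gt0.
have r1 : r <= 1 by rewrite ge_min lexx.
have hr : r * (c + 1) <= e.
  by rewrite -ler_pdivlMr // ge_min lexx orbT.
exists r => // B hB; rewrite gt_max => /andP [hN hD].
set Z := invmx A *m B.
have hZ : S Z by apply: S_mul => //; apply: S_inv.
have hNZ : Nfun nrm Z < r by rewrite /Z -/(dL nrm B A) dL_sym.
have NZ0 : 0 <= Nfun nrm Z by apply: Nfun_ge0.
set W := Z - 1%:M.
have hW : mnorm W < r.
  apply: mnorm_lt => // i j; rewrite /W.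
  case: (ltngtP i j) => ij.
  - rewrite offdiag_sub1; last by apply/eqP => e'; move: ij; rewrite e' ltnn.
    apply: (le_lt_trans _ hNZ).
    have := (proj1 (Nfun_le Z NZ0) (lexx _)) i j ij.
    move=> h; apply: le_trans h _; apply: ler_iXnr; rewrite ?subn_gt0 //.
    exact: ltW (lt_le_trans hNZ r1).
  - rewrite offdiag_sub1; last by apply/eqP => e'; move: ij; rewrite e' ltnn.
    by rewrite (S_upper hZ) // nrm0.
  - have e' : i = j by apply: val_inj.
    rewrite e' diag_sub1.
    rewrite /Z (mulmx_upper_diag _ (S_upper (S_inv hA)) (S_upper hB)).
    rewrite (inv_upper_diag _ (S_unit hA) (S_upper hA) (fun i => S_diag0 i hA)).
    have hA0 := S_diag0 j hA.
    have -> : (A j j)^-1 * B j j - 1 = (A j j)^-1 * (B j j - A j j).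
      by rewrite mulrBr mulVf.
    rewrite nrmM nrmV S_diag // invr1 mul1r nrmB.
    apply: le_lt_trans hD.
    exact: (le_bigmax _ (fun j => nrm (A j j - B j j)) j).
have eBA : B - A = A *m W.
  by rewrite /W mulmxBr mulmx1 /Z mulmxA mulmxV ?(S_unit hA) // mul1mx.
rewrite mdist_sym mdist_mnorm eBA.
apply: le_lt_trans (mnorm_mul _ _) _.
by apply: small_bound2 hr => //; apply: mnorm_ge0.
Qed.

Lemma icont_dRD : icont (fun A A' => Num.max (dR nrm A A') (Dfun nrm A A')).
Proof.
move=> A e hA e0.
set c := mnorm A.
have c0 : 0 <= c by apply: mnorm_ge0.
have c1 : 0 < c + 1 by rewrite ltr_wpDl.
set r := Num.min 1 (e / (c + 1)).
have r0 : 0 < r by rewrite lt_min ltr01 divr_gt0.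
have r1 : r <= 1 by rewrite ge_min lexx.
have hr : r * (c + 1) <= e.
  by rewrite -ler_pdivlMr // ge_min lexx orbT.
exists r => // B hB; rewrite gt_max => /andP [hN hD].
set Z := B *m invmx A.
have hZ : S Z by apply: S_mul => //; apply: S_inv.
have hNZ : Nfun nrm Z < r by rewrite /Z -/(dR nrm B A) dR_sym.
have NZ0 : 0 <= Nfun nrm Z by apply: Nfun_ge0.
set W := Z - 1%:M.
have hW : mnorm W < r.
  apply: mnorm_lt => // i j; rewrite /W.
  case: (ltngtP i j) => ij.
  - rewrite offdiag_sub1; last by apply/eqP => e'; move: ij; rewrite e' ltnn.
    apply: (le_lt_trans _ hNZ).
    have := (proj1 (Nfun_le Z NZ0) (lexx _)) i j ij.
    move=> h; apply: le_trans h _; apply: ler_iXnr; rewrite ?subn_gt0 //.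
    exact: ltW (lt_le_trans hNZ r1).
  - rewrite offdiag_sub1; last by apply/eqP => e'; move: ij; rewrite e' ltnn.
    by rewrite (S_upper hZ) // nrm0.
  - have e' : i = j by apply: val_inj.
    rewrite e' diag_sub1.
    rewrite /Z (mulmx_upper_diag _ (S_upper hB) (S_upper (S_inv hA))).
    rewrite (inv_upper_diag _ (S_unit hA) (S_upper hA) (fun i => S_diag0 i hA)).
    have hA0 := S_diag0 j hA.
    have -> : B j j * (A j j)^-1 - 1 = (B j j - A j j) * (A j j)^-1.
      by rewrite mulrBl mulfV.
    rewrite nrmM nrmV S_diag // invr1 mulr1 nrmB.
    apply: le_lt_trans hD.
    exact: (le_bigmax _ (fun j => nrm (A j j - B j j)) j).
have eBA : B - A = W *m A.
  by rewrite /W mulmxBl mul1mx /Z -mulmxA mulVmx ?(S_unit hA) // mulmx1.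
rewrite mdist_sym mdist_mnorm eBA.
apply: le_lt_trans (mnorm_mul _ _) _.
by rewrite mulrC; apply: small_bound2 hr => //; apply: mnorm_ge0.
Qed.


Definition FC (I : Type) (U : I -> mset K n) (X : mset K n) :=
  exists (m : nat) (f : 'I_m -> I), forall A, X A -> exists j, U (f j) A.

Lemma FC_sub I (U : I -> mset K n) (X Y : mset K n) :
  (forall A, X A -> Y A) -> FC U Y -> FC U X.
Proof. by move=> h [m [f hf]]; exists m, f => A /h /hf. Qed.

Lemma FC_empty I (U : I -> mset K n) (X : mset K n) : (forall A, ~ X A) -> FC U X.
Proof.
move=> h; exists 0%N.
exists (fun j : 'I_0 => match j with @Ordinal _ m hm => False_rect I (Bool.diff_false_true hm) end).
by move=> A /h.
Qed.

Lemma FC_union I (U : I -> mset K n) (X Y : mset K n) :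
  FC U X -> FC U Y -> FC U (fun A => X A \/ Y A).
Proof.
move=> [m1 [f1 h1]] [m2 [f2 h2]]; exists (m1 + m2)%N.
exists (fun j => match split j with inl a => f1 a | inr b => f2 b end).
move=> A [/h1 [j hj]|/h2 [j hj]].
  by exists (unsplit (inl j)); rewrite unsplitK.
by exists (unsplit (inr j)); rewrite unsplitK.
Qed.

Lemma FC_seq I (U : I -> mset K n) (T : eqType) (s : seq T) (X : T -> mset K n) :
  (forall t, t \in s -> FC U (X t)) -> FC U (fun A => exists2 t, t \in s & X t A).
Proof.
elim: s => [|t s IH] h; first by apply: FC_empty => A [t].
apply: (@FC_sub _ _ _ (fun A => X t A \/ exists2 t, t \in s & X t A)).
  move=> A [t']; rewrite inE => /orP [/eqP ->|ts hA]; first by left.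
  by right; exists t'.
apply: FC_union; first by apply: h; rewrite inE eqxx.
by apply: IH => t' ht'; apply: h; rewrite inE ht' orbT.
Qed.

Definition piK : K := p%:R.
Definition rr (k : nat) (m0 : nat) : R := (p%:R) ^+ m0 * (p%:R)^-1 ^+ k.
Definition lam (k : nat) (m0 : nat) : K := piK^-1 ^+ m0 * piK ^+ k.

Lemma nrm_lam k m0 : nrm (lam k m0) = rr k m0.
Proof. by rewrite /lam /rr nrmM !nrmX nrmV /piK nrm_p invrK. Qed.

Lemma rr_gt0 k m0 : 0 < rr k m0.
Proof. by rewrite /rr mulr_gt0 // exprn_gt0 // ?pR_gt0 ?pinv_gt0. Qed.

Lemma rrS k m0 : rr k.+1 m0 = rr k m0 * (p%:R)^-1.
Proof. by rewrite /rr exprSr mulrA. Qed.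

Lemma rr_le k l m0 : (k <= l)%N -> rr l m0 <= rr k m0.
Proof.
move=> kl; rewrite /rr ler_pM2l ?exprn_gt0 ?pR_gt0 //.
by apply: ler_wiXn2l => //; [apply: ltW; apply: pinv_gt0 | apply: ltW; apply: pinv_lt1].
Qed.

Lemma rr_small m0 e : 0 < e -> exists k, rr k m0 < e.
Proof.
move=> e0.
have h0 : 0 <= (p%:R : R) ^+ m0 / e by rewrite divr_ge0 // ?exprn_ge0 ?ltW ?pR_gt0.
set N := Num.Def.archi_bound ((p%:R : R) ^+ m0 / e).
have hN := archi_boundP h0.
exists N; rewrite /rr exprVn.
rewrite ltr_pdivrMr ?exprn_gt0 ?pR_gt0 //.
rewrite -ltr_pdivrMl // mulrC; apply: (lt_trans hN).
have h1 : (N < p ^ N)%N by apply: ltn_expl; apply: p_gt1.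
have : (N%:R : R) < (p ^ N)%:R by rewrite ltr_nat.
by rewrite natrX.
Qed.

Lemma rr_le0 m0 (a : R) : (forall k, a <= rr k m0) -> a <= 0.
Proof.
move=> h; rewrite leNgt; apply/negP => a0.
have [k hk] := rr_small m0 a0.
by have := h k; rewrite leNgt hk.
Qed.

Lemma big_pow (b : R) : exists m0, b <= (p%:R) ^+ m0.
Proof.
have h0 : 0 <= Num.max b 0 by rewrite le_max lexx orbT.
exists (Num.Def.archi_bound (Num.max b 0)).
apply: le_trans (_ : Num.max b 0 <= _); first by rewrite le_max lexx.
apply: ltW; apply: (lt_trans (archi_boundP h0)).
set N := Num.Def.archi_bound _.
have h1 : (N < p ^ N)%N by apply: ltn_expl; apply: p_gt1.
have : (N%:R : R) < (p ^ N)%:R by rewrite ltr_nat.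
by rewrite natrX.
Qed.

Definition Ball (m0 : nat) (c : 'M[K]_n) (k : nat) (A : 'M[K]_n) :=
  forall i j, nrm (A i j - c i j) <= rr k m0.

Definition subc (m0 : nat) (c : 'M[K]_n) (k : nat) (f : {ffun 'I_n * 'I_n -> 'I_p}) : 'M[K]_n :=
  c + \matrix_(i, j) (lam k m0 * (f (i, j) : nat)%:R).

Lemma refine m0 (c : 'M[K]_n) k A : Ball m0 c k A ->
  exists f : {ffun 'I_n * 'I_n -> 'I_p}, Ball m0 (subc m0 c k f) k.+1 A.
Proof.
move=> hA.
have lam0 : lam k m0 != 0.
  by apply/eqP => h; have := rr_gt0 k m0; rewrite -nrm_lam h nrm0 ltxx.
have : forall ij : 'I_n * 'I_n, exists t : 'I_p,
    nrm (A ij.1 ij.2 - c ij.1 ij.2 - lam k m0 * (t : nat)%:R) <= rr k.+1 m0.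
  move=> [i j] /=.
  set y := (A i j - c i j) / lam k m0.
  have hy : nrm y <= 1.
    rewrite /y nrmM nrmV nrm_lam ler_pdivrMr ?rr_gt0 // mul1r.
    exact: hA.
  have [t [tp ht]] := resid hy.
  exists (Ordinal tp) => /=.
  have -> : A i j - c i j - lam k m0 * t%:R = lam k m0 * (y - t%:R).
    by rewrite mulrBr /y mulrCA mulfV // mulr1.
  rewrite nrmM nrm_lam rrS; apply: ler_wpM2l => //; exact: ltW (rr_gt0 k m0).
move=> /fin_all_exists [g hg]; exists (finfun g) => i j.
rewrite /subc !mxE ffunE opprD addrA.
exact: (hg (i, j)).
Qed.

Lemma sub_nested m0 (c : 'M[K]_n) k f A : Ball m0 (subc m0 c k f) k.+1 A -> Ball m0 c k A.
Proof.
move=> h i j.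
have -> : A i j - c i j = (A i j - subc m0 c k f i j) + (subc m0 c k f i j - c i j).
  by rewrite addrA subrK.
apply: nrm_max_le.
  by apply: le_trans (h i j) _; apply: rr_le.
rewrite /subc !mxE addrAC subrr add0r nrmM nrm_lam.
rewrite -[X in _ <= X]mulr1 ler_wpM2l ?nrm_natr //; exact: ltW (rr_gt0 k m0).
Qed.


Lemma nrm_close1 (a b : K) : nrm a = 1 -> nrm (a - b) < 1 -> nrm b = 1.
Proof.
move=> ha hab; apply/eqP; rewrite eq_le; apply/andP; split.
  have -> : b = a - (a - b) by rewrite opprB addrC subrK.
  by apply: nrm_max_le; rewrite ?ha // nrmN ltW.
have := nrmD b (a - b); rewrite addrC subrK ha le_max => /orP [] // h.
by exfalso; move: hab; rewrite ltNge h.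
Qed.

Lemma heine_borel (C : mset K n) (b : R) : closed_in nrm S C ->
  (forall A, C A -> forall i j, nrm (A i j) <= b) -> compact_in nrm S C.
Proof.
move=> hC hb.
have CS : forall A, C A -> S A by case: hC.
split => // I U hU hcov.
apply: Classical_Prop.NNPP => hnot.
have [m0 hm0] := big_pow b.
pose P k c := ~ FC U (fun A => C A /\ Ball m0 c k A).
have P0 : P 0%N 0.
  move=> hfc; apply: hnot; change (FC U C); move: hfc; apply: FC_sub => A hA; split => // i j.
  by rewrite mxE subr0 /rr expr0 mulr1; apply: le_trans (hb A hA i j) hm0.
have step : forall k c, P k c ->
    exists c', P k.+1 c' /\ (forall A, Ball m0 c' k.+1 A -> Ball m0 c k A).
  move=> k c hP; apply: Classical_Prop.NNPP => hno; apply: hP.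
  have hall : forall f, FC U (fun A => C A /\ Ball m0 (subc m0 c k f) k.+1 A).
    move=> f; apply: Classical_Prop.NNPP => hf; apply: hno.
    exists (subc m0 c k f); split => //; exact: sub_nested.
  apply: (@FC_sub _ _ _ (fun A => exists2 f, f \in enum {ffun 'I_n * 'I_n -> 'I_p} &
            (C A /\ Ball m0 (subc m0 c k f) k.+1 A))).
    move=> A [hA hB]; have [f hf] := refine hB; exists f; first by rewrite mem_enum.
    by split.
  by apply: FC_seq => f _; apply: hall.
have [u [u0 hu]] := dep_choice P0 step.
have nested : forall k l, (k <= l)%N -> forall A, Ball m0 (u l) l A -> Ball m0 (u k) k A.
  move=> k l; elim: l => [|l IH] kl A hA.
    by move: kl; rewrite leqn0 => /eqP ->.
  rewrite leq_eqVlt in kl; case/orP: kl => [/eqP ->|kl] //.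
  by apply: IH => //; exact: (proj2 (hu l)) A hA.
have hex : forall k, exists A, C A /\ Ball m0 (u k) k A.
  move=> k; apply: Classical_Prop.NNPP => h; apply: (proj1 (hu k)).
  by apply: FC_empty => A hA; apply: h; exists A.
pose x k := sval (ClassicalEpsilon.constructive_indefinite_description _ (hex k)).
have hx : forall k, C (x k) /\ Ball m0 (u k) k (x k).
  by move=> k; exact: (svalP (ClassicalEpsilon.constructive_indefinite_description _ (hex k))).
have close : forall k l, (k <= l)%N -> forall i j, nrm (x l i j - x k i j) <= rr k m0.
  move=> k l kl i j.
  have -> : x l i j - x k i j = (x l i j - u k i j) + (u k i j - x k i j) by rewrite addrA subrK.
  apply: nrm_max_le; first exact: (nested k l kl _ (proj2 (hx l))).
  by rewrite nrmB; exact: (proj2 (hx k)).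
have hlim : forall ij : 'I_n * 'I_n, exists l : K, forall e, 0 < e ->
    exists N, forall m, (N <= m)%N -> nrm (x m ij.1 ij.2 - l) < e.
  move=> [i j]; apply: nrm_complete => e e0.
  have [N hN] := rr_small m0 e0; exists N => a c ha hc.
  apply: (le_lt_trans _ hN).
  case: (leqP a c) => ac.
    by rewrite nrmB; apply: le_trans (close a c ac i j) _; apply: rr_le.
  by apply: le_trans (close c a (ltnW ac) i j) _; apply: rr_le.
have [Lf hLf] := fin_all_exists hlim.
pose L : 'M[K]_n := \matrix_(i, j) Lf (i, j).
have xL : forall k i j, nrm (x k i j - L i j) <= rr k m0.
  move=> k i j; rewrite mxE; apply: max_eps_le; first exact: ltW (rr_gt0 k m0).
  move=> e e0; have [N hN] := hLf (i, j) e e0.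
  have -> : x k i j - Lf (i, j) = (x k i j - x (maxn N k) i j) + (x (maxn N k) i j - Lf (i, j)).
    by rewrite addrA subrK.
  apply: le_trans (nrmD _ _) _; rewrite ge_max; apply/andP; split.
    by rewrite le_max nrmB close // leq_maxr.
  rewrite le_max; apply/orP; right; apply: ltW; exact: (hN (maxn N k) (leq_maxl N k)).
have LB : forall k, Ball m0 (u k) k L.
  move=> k i j.
  have -> : L i j - u k i j = (x k i j - u k i j) - (x k i j - L i j) by ring.
  apply: nrm_max_le; first exact: (proj2 (hx k)).
  by rewrite nrmN xL.
have Lup : upper L.
  move=> i j ji; apply/nrm_eq0; apply/eqP; rewrite eq_le nrm_ge0 andbT.
  apply: (rr_le0 (m0:=m0)) => k.
  have := xL k i j; rewrite (S_upper (CS _ (proj1 (hx k)))) // sub0r nrmN //.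
have Ldiag : forall j, nrm (L j j) = 1.
  move=> j; have [k hk] := rr_small m0 ltr01.
  apply: (nrm_close1 (a := x k j j)); first exact: (S_diag _ (CS _ (proj1 (hx k)))).
  exact: le_lt_trans (xL k j j) hk.
have LS : S L.
  split => //.
  rewrite unitmxE -det_tr det_trig; last first.
    by apply/is_trig_mxP => i j ij; rewrite mxE; apply: Lup.
  rewrite unitfE; apply/prodf_neq0 => i _; rewrite mxE.
  by apply/eqP => h; have := Ldiag i; rewrite h nrm0 => /eqP; rewrite eq_sym oner_eq0.
have LC : C L.
  apply: Classical_Prop.NNPP => nC.
  have [_ [_ hop]] := hC.
  have [e e0 he] := hop L (conj LS nC).
  have [k hk] := rr_small m0 e0.
  have : mdist nrm L (x k) < e.
    apply: le_lt_trans hk; apply: mdist_le; first exact: ltW (rr_gt0 k m0).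
    by move=> i j; rewrite nrmB xL.
  by move/(he _ (CS _ (proj1 (hx k)))) => [_]; apply; exact: (proj1 (hx k)).
have [i hi] := hcov L LC.
have [e e0 he] := (proj2 (hU i)) L hi.
have [k hk] := rr_small m0 e0.
apply: (proj1 (hu k)); exists 1%N, (fun _ => i) => A [hA hB]; exists ord0.
apply: he; first exact: CS.
apply: le_lt_trans hk; apply: mdist_le; first exact: ltW (rr_gt0 k m0).
move=> i' j'.
have -> : L i' j' - A i' j' = (L i' j' - u k i' j') - (A i' j' - u k i' j') by ring.
by apply: nrm_max_le; rewrite ?nrmN; [exact: LB | exact: hB].
Qed.


Lemma mnorm_S Z M : S Z -> 1 <= M -> Nfun nrm Z <= M -> mnorm Z <= M ^+ n.
Proof.
move=> hZ M1 hN.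
have M0 : 0 <= M by apply: le_trans M1; apply: ler01.
apply: mnorm_le => [|i j]; first by rewrite exprn_ge0.
case: (ltngtP i j) => ij.
- apply: le_trans ((proj1 (Nfun_le Z M0) hN) i j ij) _.
  apply: ler_weXn2l => //; have := ltn_ord j; lia.
- by rewrite (S_upper hZ) // nrm0 exprn_ge0.
- have -> : i = j by apply: val_inj.
  by rewrite S_diag // exprn_ege1.
Qed.

Lemma proper_dL : proper_sm nrm S (dL nrm).
Proof.
move=> C hC [x [r [hx hb]]].
apply: (heine_borel (b := mnorm x * (Num.max 1 r) ^+ n)) => // y hy i j.
have [hyS hxy] := hb y hy.
set Z := invmx x *m y.
have hZ : S Z by apply: S_mul => //; apply: S_inv.
have hNZ : Nfun nrm Z <= Num.max 1 r.
  rewrite le_max; apply/orP; right; apply: ltW.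
  by rewrite /Z -/(dL nrm y x) dL_sym.
have ey : y = x *m Z by rewrite /Z mulmxA mulmxV ?(S_unit hx) // mul1mx.
apply: le_trans (mnorm_entry y i j) _; rewrite ey.
apply: le_trans (mnorm_mul _ _) _.
apply: ler_wpM2l; first exact: mnorm_ge0.
by apply: mnorm_S => //; rewrite le_max lexx.
Qed.

Lemma proper_dR : proper_sm nrm S (dR nrm).
Proof.
move=> C hC [x [r [hx hb]]].
apply: (heine_borel (b := (Num.max 1 r) ^+ n * mnorm x)) => // y hy i j.
have [hyS hxy] := hb y hy.
set Z := y *m invmx x.
have hZ : S Z by apply: S_mul => //; apply: S_inv.
have hNZ : Nfun nrm Z <= Num.max 1 r.
  rewrite le_max; apply/orP; right; apply: ltW.
  by rewrite /Z -/(dR nrm y x) dR_sym.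
have ey : y = Z *m x by rewrite /Z -mulmxA mulVmx ?(S_unit hx) // mulmx1.
apply: le_trans (mnorm_entry y i j) _; rewrite ey.
apply: le_trans (mnorm_mul _ _) _.
apply: ler_wpM2r; first exact: mnorm_ge0.
by apply: mnorm_S => //; rewrite le_max lexx.
Qed.

Definition Hs (M : R) : mset K n := fun A => S A /\ Nfun nrm A <= M.

Lemma Hs_subgroup M : 0 <= M -> subgroup_of S (Hs M).
Proof.
move=> M0; split.
- by move=> A [].
- by split; [exact: S1 | rewrite Nfun1].
- move=> A B [hA hNA] [hB hNB]; split; first exact: S_mul.
  by apply: le_trans (NfunM hA hB) _; rewrite ge_max hNA hNB.
- move=> A [hA hNA]; split; first exact: S_inv.
  by rewrite NfunV.
Qed.

Lemma N_split A B : S A -> S B -> Nfun nrm B <= Num.max (Nfun nrm A) (dL nrm A B).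
Proof.
move=> hA hB.
have eB : B = A *m (invmx A *m B) by rewrite mulmxA mulmxV ?(S_unit hA) // mul1mx.
rewrite dL_sym // /dL {1}eB; apply: NfunM => //.
apply: S_mul => //; exact: S_inv.
Qed.

Lemma Hs_open M : 0 < M -> open_in nrm S (Hs M).
Proof.
move=> M0; split; first by move=> A [].
move=> A [hA hNA].
have [e e0 he] := cont_dL hA M0.
exists e => // B hB hAB; split => //.
apply: le_trans (N_split hA hB) _; rewrite ge_max hNA /=.
exact: ltW (he B hB hAB).
Qed.

Lemma Hs_closed M : 0 < M -> closed_in nrm S (Hs M).
Proof.
move=> M0; split; first by move=> A [].
split; first by move=> A [].
move=> A [hA nH].
have hNA : M < Nfun nrm A by rewrite ltNge; apply/negP => h; apply: nH.
have NA0 : 0 < Nfun nrm A by apply: lt_trans hNA.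
have [e e0 he] := cont_dL hA NA0.
exists e => // B hB hAB; split => //.
move=> [_ hNB].
have := N_split hB hA; rewrite dL_sym // le_max => /orP [] h.
  by move: hNA; rewrite ltNge (le_trans h hNB).
by move: (he B hB hAB); rewrite ltNge h.
Qed.

Lemma Hs_compact M : 1 <= M -> compact_in nrm S (Hs M).
Proof.
move=> M1.
have M0 : 0 < M by apply: lt_le_trans M1; apply: ltr01.
apply: (heine_borel (b := M ^+ n)); first exact: Hs_closed.
move=> A [hA hNA] i j.
by apply: le_trans (mnorm_entry A i j) _; apply: mnorm_S.
Qed.

Lemma lcos : large_compact_open_subgroups nrm S.
Proof.
move=> C [CS hcomp].
have hcov : forall A, C A -> exists k : nat, Hs (k.+1)%:R A.
  move=> A hA; have hS := CS A hA.
  have h0 := Nfun_ge0 A.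
  exists (Num.Def.archi_bound (Nfun nrm A)); split => //.
  apply: ltW; apply: lt_le_trans (archi_boundP h0) _.
  by rewrite ler_nat.
have [m [f hf]] := hcomp nat (fun k => Hs (k.+1)%:R)
  (fun k => Hs_open (ltr0Sn _ _)) hcov.
set M : R := (\max_(j < m) f j).+1%:R.
have M1 : 1 <= M by rewrite /M ler1n.
exists (Hs M); split.
- by apply: Hs_subgroup; apply: le_trans M1; apply: ler01.
- by apply: Hs_open; apply: lt_le_trans M1; apply: ltr01.
- exact: Hs_compact.
- move=> A hA; have [j [hAS hNA]] := hf A hA; split => //.
  apply: le_trans hNA _; rewrite /M ler_nat ltnS.
  exact: (leq_bigmax (F := f) j).
Qed.

Lemma main_sec :
  let S0 : mset K n := Ttil nrm in
  let dLD := fun A A' : 'M[K]_n => Num.max (dL nrm A A') (Dfun nrm A A') in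
  let dRD := fun A A' : 'M[K]_n => Num.max (dR nrm A A') (Dfun nrm A A') in
  ((forall A A', S0 A -> S0 A' ->
      Nfun nrm (A *m A') <= Num.max (Nfun nrm A) (Nfun nrm A')) /\
   (forall A, S0 A -> Nfun nrm (invmx A) = Nfun nrm A)) /\
  [/\ semi_ultrametric S0 (dL nrm), left_invariant S0 (dL nrm),
      compatible nrm S0 (dL nrm) & proper_sm nrm S0 (dL nrm)] /\
  [/\ semi_ultrametric S0 (dR nrm), right_invariant S0 (dR nrm),
      compatible nrm S0 (dR nrm) & proper_sm nrm S0 (dR nrm)] /\
  large_compact_open_subgroups nrm S0 /\
  [/\ semi_ultrametric S0 (Dfun nrm), left_invariant S0 (Dfun nrm)
      & right_invariant S0 (Dfun nrm)] /\
  [/\ ultrametric S0 dLD, left_invariant S0 dLD & determines_topology nrm S0 dLD] /\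
  [/\ ultrametric S0 dRD, right_invariant S0 dRD & determines_topology nrm S0 dRD].
Proof.
move=> S0 dLD dRD.
split; first by split; [move=> A B hA hB; exact: NfunM | move=> A hA; exact: NfunV].
split; first by split; [exact: dL_semi | exact: dL_left
  | apply: compat_of; [exact: dL_semi | exact: cont_dL] | exact: proper_dL].
split; first by split; [exact: dR_semi | exact: dR_right
  | apply: compat_of; [exact: dR_semi | exact: cont_dR] | exact: proper_dR].
split; first exact: lcos.
split; first by split; [exact: Dfun_semi | exact: Dfun_left | exact: Dfun_right].
split.
  split; [exact: dLD_ultra | exact: dLD_left |].
  by apply: topo_of; [apply: cont_maxD; exact: cont_dL | exact: icont_dLD].
split; [exact: dRD_ultra | exact: dRD_right |].
by apply: topo_of; [apply: cont_maxD; exact: cont_dR | exact: icont_dRD].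
Qed.


End Main.

Theorem mainTheorem12 (p : nat) (R : realType) (K : fieldType) (nrm : K -> R)
  (n : nat) :
  prime p -> is_Qp p nrm -> (0 < n)%N ->
  let S : mset K n := Ttil nrm in
  let dLD := fun A A' : 'M[K]_n => Num.max (dL nrm A A') (Dfun nrm A A') in
  let dRD := fun A A' : 'M[K]_n => Num.max (dR nrm A A') (Dfun nrm A A') in
  (* N is submultiplicative-ultrametric and inversion-invariant *)
  ((forall A A', S A -> S A' ->
      Nfun nrm (A *m A') <= Num.max (Nfun nrm A) (Nfun nrm A')) /\
   (forall A, S A -> Nfun nrm (invmx A) = Nfun nrm A)) /\
  (* N((A')^-1 A) and N(A (A')^-1) *)
  [/\ semi_ultrametric S (dL nrm), left_invariant S (dL nrm),
      compatible nrm S (dL nrm) & proper_sm nrm S (dL nrm)] /\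
  [/\ semi_ultrametric S (dR nrm), right_invariant S (dR nrm),
      compatible nrm S (dR nrm) & proper_sm nrm S (dR nrm)] /\
  large_compact_open_subgroups nrm S /\
  (* D *)
  [/\ semi_ultrametric S (Dfun nrm), left_invariant S (Dfun nrm)
      & right_invariant S (Dfun nrm)] /\
  (* max(N, D) *)
  [/\ ultrametric S dLD, left_invariant S dLD & determines_topology nrm S dLD] /\
  [/\ ultrametric S dRD, right_invariant S dRD & determines_topology nrm S dRD].

Proof.
move=> pP HQ _; exact: (main_sec n pP HQ).
Qed.
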